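(* Let $\{\rho_\theta\}$ be a model as in the context and suppose $\theta\mapsto\rho_\theta$ is differentiable from the right at $\theta$, with right derivative $\rho'_\theta$. Take $c_n=\sqrt n$. Then $J^{R,1}_\theta=J^R_\theta$, where $J^R_\theta=\mathrm{Tr}(\rho_\theta L^R_\theta(L^R_\theta)^\dagger)$ and $L^R_\theta=\rho_\theta^{-1}\rho'_\theta$.
   Context: $\mathcal H$ finite-dimensional, $\rho_\theta>0$. $\Delta^1_\delta f(\theta)=(f(\theta+\delta)-f(\theta))/\delta$; $L^{R,n,1}_{\theta,\delta}$ solves $\Delta^1_\delta\rho_\theta^{\otimes n}=\rho_\theta^{\otimes n}L^{R,n,1}_{\theta,\delta}$; $J^{R,1}_\theta=\limsup_{h\to0+}\limsup_{n\to\infty}c_n^{-2}\mathrm{Tr}\big(\rho_\theta^{\otimes n}L^{R,n,1}_{\theta,h/c_n}(L^{R,n,1}_{\theta,h/c_n})^\dagger\big)$. *)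

(* Defs.v *)
From HB Require Import structures.
From mathcomp Require Import all_boot all_order all_algebra.
From mathcomp Require Import complex mxtens.
From mathcomp Require Import all_classical all_reals all_analysis.
Set Implicit Arguments. Unset Strict Implicit. Unset Printing Implicit Defensive.
Import Order.TTheory GRing.Theory Num.Theory.
Import numFieldNormedType.Exports.
Local Open Scope ring_scope.
Local Open Scope complex_scope.
Local Open Scope classical_set_scope.

Definition adj (R : rcfType) m n (A : 'M[R[i]]_(m, n)) : 'M[R[i]]_(n, m) :=
  (map_mx (@conjc R) A)^T.

Definition posdef (R : rcfType) d (A : 'M[R[i]]_d) : Prop :=
  adj A = A /\ forall v : 'rV[R[i]]_d, v != 0 -> 0 < (v *m A *m adj v) 0 0.

Definition faithful_state (R : rcfType) d (A : 'M[R[i]]_d) : Prop :=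
  posdef A /\ \tr A = 1.

Definition is_right_derivative (R : realType) d
  (rho : R -> 'M[R[i]]_d) (theta : R) (D : 'M[R[i]]_d) : Prop :=
  forall i j : 'I_d,
    (fun delta : R => complex.Re ((delta^-1)%:C * (rho (theta + delta) i j - rho theta i j)))
      @ (0:R)^'+ --> (complex.Re (D i j) : R) /\
    (fun delta : R => complex.Im ((delta^-1)%:C * (rho (theta + delta) i j - rho theta i j)))
      @ (0:R)^'+ --> (complex.Im (D i j) : R).

Definition rho_tens (R : rcfType) d (rho : R -> 'M[R[i]]_d) (n : nat) (t : R)
  : 'M[R[i]]_(d ^ n) := ntensmx (rho t) n.

Definition Delta1 (R : rcfType) d (rho : R -> 'M[R[i]]_d) (n : nat) (theta delta : R)
  : 'M[R[i]]_(d ^ n) :=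
  (delta^-1)%:C *: (rho_tens rho n (theta + delta) - rho_tens rho n theta).

(* L^{R,n,1}_{theta,delta}: the (unique, since rho^{\otimes n} is invertible)
   solution of Delta1 = rho^{\otimes n} L *)
Definition LRn1 (R : rcfType) d (rho : R -> 'M[R[i]]_d) (n : nat) (theta delta : R)
  : 'M[R[i]]_(d ^ n) :=
  invmx (rho_tens rho n theta) *m Delta1 rho n theta delta.

Definition cn (R : rcfType) (n : nat) : R := Num.sqrt (n%:R).

(* the quantity c_n^{-2} Tr(rho^{\otimes n} L L^dagger) with delta = h / c_n
   (real part; the trace is real) *)
Definition Jseq (R : rcfType) d (rho : R -> 'M[R[i]]_d) (theta h : R) (n : nat) : R :=
  (cn R n) ^- 2 *
  complex.Re (\tr (rho_tens rho n theta *m LRn1 rho n theta (h / cn R n)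
                   *m adj (LRn1 rho n theta (h / cn R n)))).

Definition JR1 (R : realType) d (rho : R -> 'M[R[i]]_d) (theta : R) : \bar R :=
  limf_esup (fun h : R => limn_esup (fun n => (Jseq rho theta h n)%:E)) (0:R)^'+.

Definition LR (R : rcfType) d (rho : R -> 'M[R[i]]_d) (theta : R) (D : 'M[R[i]]_d)
  : 'M[R[i]]_d := invmx (rho theta) *m D.

(* J^R_theta = Tr(rho_theta L^R (L^R)^dagger) (real part; the trace is real) *)
Definition JR (R : rcfType) d (rho : R -> 'M[R[i]]_d) (theta : R) (D : 'M[R[i]]_d) : R :=
  complex.Re (\tr (rho theta *m LR rho theta D *m adj (LR rho theta D))).

(* Main.v *)
Require Import Defs.
From HB Require Import structures.
From mathcomp Require Import all_boot all_order all_algebra.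
From mathcomp Require Import complex mxtens.
From mathcomp Require Import all_classical all_reals all_analysis.
Import Order.TTheory GRing.Theory Num.Theory.
Import numFieldNormedType.Exports.
Local Open Scope ring_scope.
Set Warnings "-all".
Local Open Scope complex_scope.

Lemma tr_map (R : rcfType) n (A : 'M[R[i]]_n) : \tr (map_mx (@conjc R) A) = (\tr A)^*.
Proof. by rewrite /mxtrace rmorph_sum; apply: eq_bigr => i _; rewrite mxE. Qed.

Lemma adjM (R : rcfType) m n p (A : 'M[R[i]]_(m,n)) (B : 'M[R[i]]_(n,p)) :
  adj (A *m B) = adj B *m adj A.
Proof. by rewrite /adj map_mxM trmx_mul. Qed.

Lemma adjK (R : rcfType) m n (A : 'M[R[i]]_(m,n)) : adj (adj A) = A.
Proof. by apply/matrixP => i j; rewrite !mxE conjcK. Qed.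

Lemma adjB (R : rcfType) m n (A B : 'M[R[i]]_(m,n)) : adj (A - B) = adj A - adj B.
Proof. by apply/matrixP => i j; rewrite !mxE rmorphB. Qed.

Lemma adjZr (R : rcfType) m n (c : R) (A : 'M[R[i]]_(m,n)) : adj (c%:C *: A) = c%:C *: adj A.
Proof. by apply/matrixP => i j; rewrite !mxE rmorphM /= oppr0. Qed.

Lemma tr_adj (R : rcfType) n (A : 'M[R[i]]_n) : \tr (adj A) = (\tr A)^*.
Proof. by rewrite /adj mxtrace_tr tr_map. Qed.

Lemma adj_inv (R : rcfType) n (A : 'M[R[i]]_n) : adj (invmx A) = invmx (adj A).
Proof. by rewrite /adj map_invmx trmx_inv. Qed.

Lemma adj1 (R : rcfType) n : adj (1%:M : 'M[R[i]]_n) = 1%:M.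
Proof. by rewrite /adj map_mx1 trmx1. Qed.

Lemma tr_tens (R : comPzRingType) m n (A : 'M[R]_m) (B : 'M[R]_n) :
  \tr (A *t B) = \tr A * \tr B.
Proof. by rewrite /mxtrace mulr_sum; apply: eq_bigr => i _; rewrite mxE. Qed.

Lemma tens11 (R : comPzRingType) m n : (1%:M : 'M[R]_m) *t (1%:M : 'M[R]_n) = 1%:M.
Proof.
apply/matrixP => i j.
case: (mxtens_indexP i) => i1 i2; case: (mxtens_indexP j) => j1 j2.
rewrite tensmxE !mxE -natrM mulnb; congr ((_ : bool)%:R).
apply/idP/idP.
  by case/andP => /eqP -> /eqP ->.
move/eqP => /(congr1 (@mxtens_unindex m n)); rewrite !mxtens_indexK => -[-> ->].
by rewrite !eqxx.
Qed.

Lemma ntens_rec_ind (R : pzRingType) m n (A : 'M[R]_(m,n)) k :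
  A ^t k.+2 = A *t A ^t k.+1.
Proof. by []. Qed.

Lemma tr_ntens (R : comPzRingType) m (A : 'M[R]_m) k :
  \tr (A ^t k) = \tr A ^+ k.
Proof.
case: k => [|k]; first by rewrite ntensmx0 mxtrace1 expr0.
elim: k => [|k IH]; first by rewrite ntensmx1 expr1.
by rewrite ntensmxSS tr_tens IH [RHS]exprS.
Qed.

Lemma ntens_mul (R : comPzRingType) m (A B : 'M[R]_m) k :
  A ^t k *m B ^t k = (A *m B) ^t k.
Proof.
case: k => [|k]; first by rewrite !ntensmx0 mulmx1.
elim: k => [|k IH]; first by rewrite !ntensmx1.
by rewrite !ntensmxSS tensmx_mul IH.
Qed.

Lemma ntens1 (R : comPzRingType) m k : (1%:M : 'M[R]_m) ^t k = 1%:M.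
Proof.
case: k => [|k]; first by rewrite ntensmx0.
elim: k => [|k IH]; first by rewrite ntensmx1.
by rewrite ntensmxSS IH tens11.
Qed.

Lemma adj_tens (R : rcfType) m n (A : 'M[R[i]]_m) (B : 'M[R[i]]_n) :
  adj (A *t B) = adj A *t adj B.
Proof. by rewrite /adj map_mxT trmx_tens. Qed.

Lemma adj_ntens (R : rcfType) m (A : 'M[R[i]]_m) k : adj (A ^t k) = (adj A) ^t k.
Proof.
case: k => [|k]; first by rewrite !ntensmx0 adj1.
elim: k => [|k IH]; first by rewrite !ntensmx1.
by rewrite !ntensmxSS adj_tens IH.
Qed.
From mathcomp Require Import ring lra.

Lemma key (R : rcfType) m (P S Wn : 'M[R[i]]_m) (c : R) :
  Wn *m P = 1%:M -> P *m Wn = 1%:M -> adj S = S -> adj P = P -> adj Wn = Wn ->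
  \tr (P *m (Wn *m (c%:C *: (S - P))) *m adj (Wn *m (c%:C *: (S - P))))
  = (c ^+ 2)%:C * (\tr (S *m S *m Wn) - 2 * \tr S + \tr P).
Proof.
move=> hWP hPW hS hP hW.
rewrite adjM adjZr adjB hS hP hW.
have -> : P *m (Wn *m (c%:C *: (S - P))) *m (c%:C *: (S - P) *m Wn)
   = (c^+2)%:C *: ((S - P) *m (S - P) *m Wn).
  rewrite !mulmxA hPW mul1mx -!scalemxAl -scalemxAr -scalemxAl scalerA -rmorphM /= -expr2.
  by [].  
rewrite mxtraceZ; congr (_ * _).
rewrite mulmxBl !mulmxBr !mulmxBl !linearB /=.
have e1 : \tr (S *m P *m Wn) = \tr S by rewrite -mulmxA hPW mulmx1.
have e2 : \tr (P *m S *m Wn) = \tr S by rewrite mxtrace_mulC mulmxA hWP mul1mx.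
have e3 : \tr (P *m P *m Wn) = \tr P by rewrite -mulmxA hPW mulmx1.
rewrite e1 e2 e3; ring.
Qed.

Lemma posdef_unit (R : rcfType) n (A : 'M[R[i]]_n) : posdef A -> A \in unitmx.
Proof.
case=> _ hpos; rewrite -row_free_unit -kermx_eq0.
case: (pselect (exists i, row i (kermx A) != 0)) => [[i hi]|H].
  exfalso; have hv : row i (kermx A) *m A = 0 by apply/sub_kermxP; rewrite row_sub.
  by move: (hpos _ hi); rewrite hv mul0mx mxE ltxx.
apply/eqP/row_matrixP => i; rewrite row0.
by apply/eqP/negP => h; apply: H; exists i; apply/negP.
Qed.

Lemma tr_real (R : rcfType) m n (P : 'M[R[i]]_m) (L : 'M[R[i]]_(m,n)) :
  adj P = P -> \tr (P *m L *m adj L) = (complex.Re (\tr (P *m L *m adj L)))%:C.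
Proof.
move=> hP.
have hc : (\tr (P *m L *m adj L))^* = \tr (P *m L *m adj L).
  by rewrite -tr_adj !adjM adjK hP mulmxA mxtrace_mulC mulmxA.
move: hc; case: (\tr _) => a b /= [] hb.
suff -> : b = 0 by [].
have : b + b = 0 by rewrite -{1}hb addNr.
lra.

Qed.

Lemma Tn_formula (R : rcfType) d (rho : R -> 'M[R[i]]_d) theta n delta :
  (forall t, faithful_state (rho t)) ->
  \tr (rho_tens rho n theta *m LRn1 rho n theta delta *m adj (LRn1 rho n theta delta))
  = ((delta^-1) ^+ 2)%:C *
    (\tr (rho (theta+delta) *m rho (theta+delta) *m invmx (rho theta)) ^+ n - 1).
Proof.
move=> hf.
have [[hA _] hT] := hf theta; have [[hA' _] hT'] := hf (theta+delta).
have hU := @posdef_unit _ _ _ (proj1 (hf theta)).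
set W := invmx (rho theta).
have hWP : W ^t n *m rho_tens rho n theta = 1%:M.
  by rewrite /rho_tens ntens_mul mulVmx // ntens1.
have [_ hPu] := mulmx1_unit hWP.
have hinv : invmx (rho_tens rho n theta) = W ^t n.
  by rewrite -[invmx _]mul1mx -hWP -mulmxA mulmxV // mulmx1.
rewrite /LRn1 /Delta1 hinv key //.
- rewrite /rho_tens !ntens_mul !tr_ntens hT hT' expr1n; congr (_ * _); ring.
- by rewrite /rho_tens ntens_mul mulmxV // ntens1.
- by rewrite /rho_tens adj_ntens hA'.
- by rewrite /rho_tens adj_ntens hA.
- by rewrite adj_ntens /W adj_inv hA.
Qed.

Definition gfun (R : rcfType) d (rho : R -> 'M[R[i]]_d) theta (delta : R) : R :=
  JR rho theta ((delta^-1)%:C *: (rho (theta+delta) - rho theta)).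
Arguments gfun {R d}.

Lemma x_formula (R : rcfType) d (rho : R -> 'M[R[i]]_d) theta delta :
  (forall t, faithful_state (rho t)) -> delta != 0 ->
  \tr (rho (theta+delta) *m rho (theta+delta) *m invmx (rho theta))
  = (1 + delta ^+ 2 * gfun rho theta delta)%:C.
Proof.
move=> hf hd.
have [[hA _] hT] := hf theta; have [[hA' _] hT'] := hf (theta+delta).
have hU := @posdef_unit _ _ _ (proj1 (hf theta)).
set x := \tr _.
have hz : (gfun rho theta delta)%:C = ((delta^-1) ^+ 2)%:C * (x - 1).
  rewrite /gfun /JR /LR -tr_real; last by [].
  rewrite key //.
  - by rewrite hT hT'; congr (_ * _); ring.
  - by rewrite mulVmx.
  - by rewrite mulmxV.
  - by rewrite adj_inv hA.
have -> : (1 + delta ^+ 2 * gfun rho theta delta)%:C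
   = 1 + (delta%:C)^+2 * (gfun rho theta delta)%:C.
  by rewrite rmorphD rmorph1 rmorphM rmorphXn.
move: hz; rewrite rmorphXn fmorphV => hz; rewrite hz.
have hdC : delta%:C != 0 by rewrite eq_complex /= negb_and hd.
field; exact: hdC.
Qed.

Lemma ReCX (R : rcfType) (a b : R) n :
  complex.Re (a%:C * (b%:C ^+ n - 1)) = a * (b ^+ n - 1).
Proof.
have -> : b%:C ^+ n - 1 = (b ^+ n - 1)%:C by rewrite rmorphB rmorphXn rmorph1.
by rewrite /= mul0r subr0.
Qed.

Lemma Jseq_formula (R : rcfType) d (rho : R -> 'M[R[i]]_d) theta h n :
  (forall t, faithful_state (rho t)) -> 0 < h -> (0 < n)%N ->
  Jseq rho theta h n =
  ((1 + h ^+ 2 / n%:R * gfun rho theta (h / cn R n)) ^+ n - 1) / h ^+ 2.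
Proof.
move=> hf hh hn.
have hs : 0 < cn R n by rewrite /cn sqrtr_gt0 ltr0n.
have hs2 : cn R n ^+ 2 = n%:R by rewrite /cn sqr_sqrtr // ler0n.
have hd : h / cn R n != 0 by rewrite mulf_neq0 // ?invr_eq0 gt_eqF.
rewrite /Jseq Tn_formula // x_formula //.
rewrite ReCX.
have e : (h / cn R n) ^+ 2 = h ^+ 2 / n%:R by rewrite expr_div_n hs2.
rewrite hs2 exprVn e.
have hn0 : (n%:R : R) != 0 by rewrite pnatr_eq0 -lt0n.
have hh0 : h != 0 by rewrite gt_eqF.
field. by rewrite hn0 hh0.
Qed.
Local Open Scope classical_set_scope.
Set Implicit Arguments.

Definition ccvg {R : realType} (F : set_system R) (f : R -> R[i]) (l : R[i]) :=
  (fun x => complex.Re (f x)) @ F --> complex.Re l /\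
  (fun x => complex.Im (f x)) @ F --> complex.Im l.

Lemma ccvg_cst (R : realType) (F : set_system R) {FF : Filter F} (l : R[i]) :
  ccvg F (fun _ => l) l.
Proof. by split; apply: cvg_cst. Qed.

Lemma ccvg_add (R : realType) (F : set_system R) {FF : Filter F} f g (a b : R[i]) :
  ccvg F f a -> ccvg F g b -> ccvg F (fun x => f x + g x) (a + b).
Proof.
case: a => a1 a2; case: b => b1 b2 [h1 h2] [h3 h4]; split => /=.
  have -> : (fun x => complex.Re (f x + g x)) = (fun x => complex.Re (f x) + complex.Re (g x)).
    by apply: funext => x; case: (f x) => ? ?; case: (g x).
  exact: cvgD.
have -> : (fun x => complex.Im (f x + g x)) = (fun x => complex.Im (f x) + complex.Im (g x)).
  by apply: funext => x; case: (f x) => ? ?; case: (g x).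
exact: cvgD.
Qed.

Lemma ccvg_mul (R : realType) (F : set_system R) {FF : Filter F} f g (a b : R[i]) :
  ccvg F f a -> ccvg F g b -> ccvg F (fun x => f x * g x) (a * b).
Proof.
case: a => a1 a2; case: b => b1 b2 [h1 h2] [h3 h4]; split => /=.
  have -> : (fun x => complex.Re (f x * g x)) = (fun x => complex.Re (f x) * complex.Re (g x) - complex.Im (f x) * complex.Im (g x)).
    by apply: funext => x; case: (f x) => ? ?; case: (g x).
  by apply: cvgB; apply: cvgM.
have -> : (fun x => complex.Im (f x * g x)) = (fun x => complex.Re (f x) * complex.Im (g x) + complex.Im (f x) * complex.Re (g x)).
  by apply: funext => x; case: (f x) => ? ?; case: (g x).
by apply: cvgD; apply: cvgM.
Qed.

Lemma ccvg_conj (R : realType) (F : set_system R) {FF : Filter F} f (a : R[i]) :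
  ccvg F f a -> ccvg F (fun x => (f x)^*) (a^*).
Proof.
case: a => a1 a2 [h1 h2]; split => /=.
  have -> : (fun x => complex.Re ((f x)^*)) = (fun x => complex.Re (f x)).
    by apply: funext => x; case: (f x).
  exact: h1.
have -> : (fun x => complex.Im ((f x)^*)) = (fun x => - complex.Im (f x)).
  by apply: funext => x; case: (f x).
exact: cvgN.
Qed.

Lemma ccvg_sum (R : realType) (F : set_system R) {FF : Filter F} (I : Type) (r : seq I)
  (f : I -> R -> R[i]) (l : I -> R[i]) :
  (forall i, ccvg F (f i) (l i)) ->
  ccvg F (fun x => \sum_(i <- r) f i x) (\sum_(i <- r) l i).
Proof.
move=> h; elim: r => [|a r IH].
  have -> : (fun x => \sum_(i <- [::]) f i x) = (fun _ => 0) by apply: funext => x; rewrite big_nil.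
  by rewrite big_nil; apply: ccvg_cst.
have -> : (fun x => \sum_(i <- a :: r) f i x) = (fun x => f a x + \sum_(i <- r) f i x).
  by apply: funext => x; rewrite big_cons.
by rewrite big_cons; apply: ccvg_add.
Qed.

Definition mccvg {R : realType} (F : set_system R) m n (A : R -> 'M[R[i]]_(m,n)) (L : 'M[R[i]]_(m,n)) :=
  forall i j, ccvg F (fun x => A x i j) (L i j).

Lemma mccvg_cst (R : realType) (F : set_system R) {FF : Filter F} m n (L : 'M[R[i]]_(m,n)) :
  mccvg F (fun _ => L) L.
Proof. by move=> i j; apply: ccvg_cst. Qed.

Lemma mccvg_mul (R : realType) (F : set_system R) {FF : Filter F} m n p
  (A : R -> 'M[R[i]]_(m,n)) (B : R -> 'M[R[i]]_(n,p)) LA LB :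
  mccvg F A LA -> mccvg F B LB -> mccvg F (fun x => A x *m B x) (LA *m LB).
Proof.
move=> hA hB i j.
have -> : (fun x => (A x *m B x) i j) = (fun x => \sum_(k <- index_enum 'I_n) A x i k * B x k j).
  by apply: funext => x; rewrite mxE.
rewrite mxE; apply: ccvg_sum => k; exact: ccvg_mul.
Qed.

Lemma mccvg_adj (R : realType) (F : set_system R) {FF : Filter F} m n
  (A : R -> 'M[R[i]]_(m,n)) LA :
  mccvg F A LA -> mccvg F (fun x => adj (A x)) (adj LA).
Proof.
move=> hA i j.
have -> : (fun x => adj (A x) i j) = (fun x => (A x j i)^*).
  by apply: funext => x; rewrite !mxE.
rewrite !mxE; exact: ccvg_conj.
Qed.

Lemma ccvg_tr (R : realType) (F : set_system R) {FF : Filter F} m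
  (A : R -> 'M[R[i]]_m) LA :
  mccvg F A LA -> ccvg F (fun x => \tr (A x)) (\tr LA).
Proof. by move=> hA; apply: ccvg_sum => k; apply: hA. Qed.

Lemma g_cvg (R : realType) d (rho : R -> 'M[R[i]]_d) theta D :
  is_right_derivative rho theta D ->
  gfun rho theta @ 0^'+ --> JR rho theta D.
Proof.
move=> hD; have FF : Filter ((0:R)^'+) by exact: _.
have hM : mccvg 0^'+ (fun x : R => (x^-1)%:C *: (rho (theta + x) - rho theta)) D.
  move=> i j.
  have -> : (fun x : R => ((x^-1)%:C *: (rho (theta + x) - rho theta)) i j)
     = (fun x => (x^-1)%:C * (rho (theta + x) i j - rho theta i j)).
    by apply: funext => x; rewrite !mxE.
  exact: hD.
have hL := @mccvg_mul _ _ FF _ _ _ _ _ _ _ (@mccvg_cst _ _ FF _ _ (invmx (rho theta))) hM.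
have [h1 _] := @ccvg_tr _ _ FF _ _ _ (@mccvg_mul _ _ FF _ _ _ _ _ _ _
   (@mccvg_mul _ _ FF _ _ _ _ _ _ _ (@mccvg_cst _ _ FF _ _ (rho theta)) hL) (@mccvg_adj _ _ FF _ _ _ _ hL)).
exact: h1.
Qed.

Lemma bern (R : realFieldType) (t : R) n : -1 <= t -> 1 + n%:R * t <= (1 + t) ^+ n.
Proof.
move=> ht; elim: n => [|n IH]; first by rewrite mul0r addr0 expr0.
rewrite exprS -natr1.
have h0 : 0 <= 1 + t by lra.
have := ler_wpM2l h0 IH.
have : 0 <= n%:R * t ^+ 2 by rewrite mulr_ge0 ?ler0n ?sqr_ge0.
nra.
Qed.

Lemma Jbounds (R : realFieldType) (h g : R) n : 0 < h -> (0 < n)%N ->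
  `|h ^+ 2 * g| <= 1/2 ->
  g <= ((1 + h ^+ 2 / n%:R * g) ^+ n - 1) / h ^+ 2 <= g / (1 - h ^+ 2 * g).
Proof.
move=> hh hn hu.
set u := h ^+ 2 * g.
have hn0 : 0 < (n%:R : R) by rewrite ltr0n.
have hh2 : 0 < h ^+ 2 by rewrite exprn_gt0.
have e : h ^+ 2 / n%:R * g = u / n%:R by rewrite /u; field; rewrite gt_eqF.
rewrite e; set t := u / n%:R.
have hu2 : -(1/2) <= u <= 1/2 by rewrite -ler_norml.
have hn1 : 1 <= (n%:R : R) by rewrite ler1n.
have ht : `|t| <= 1/2.
  rewrite /t normrM normfV normr_nat.
  rewrite ler_pdivrMr //. have : 1/2 <= 1/2 * (n%:R : R) by lra. lra.
have ht2 : -(1/2) <= t <= 1/2 by rewrite -ler_norml.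
have ent : n%:R * t = u by rewrite /t; field; rewrite gt_eqF.
have hA := @bern _ t n.
have hB := @bern _ (- t) n.
apply/andP; split.
  rewrite ler_pdivlMr //.
  have := hA ltac:(lra); rewrite ent /u; lra.
have hB' := hB ltac:(lra).
rewrite mulrN ent in hB'.
have hAB : (1 + t) ^+ n * (1 + - t) ^+ n <= 1.
  rewrite -exprMn; apply: exprn_ile1; nra.
have hA0 : 0 <= (1 + t) ^+ n by apply: exprn_ge0; lra.
have hAu : (1 + t) ^+ n * (1 - u) <= 1.
  apply: le_trans hAB; apply: ler_wpM2l => //; lra.
have h1u : 0 < 1 - u by lra.
rewrite ler_pdivrMr //.
have -> : g / (1 - u) * h ^+ 2 = u / (1 - u) by rewrite /u; field; rewrite gt_eqF.
rewrite ler_pdivlMr //; nra.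
Qed.
Lemma limf_esup_le_near (T : choiceType) (X : filteredType T) (R : realType)
  (f : X -> \bar R) (F : set_system X) (b : \bar R) :
  F (fun x => (f x <= b)%E) -> (limf_esup f F <= b)%E.
Proof.
move=> hF; rewrite limf_esupE; apply: ge_ereal_inf.
exists (ereal_sup (f @` (fun x => (f x <= b)%E))); first by exists (fun x => (f x <= b)%E).
by apply: ge_ereal_sup => y [x hx <-].
Qed.

Lemma le_limf_esup_near (T : choiceType) (X : filteredType T) (R : realType)
  (f : X -> \bar R) (F : set_system X) {FF : ProperFilter F} (a : \bar R) :
  F (fun x => (a <= f x)%E) -> (a <= limf_esup f F)%E.
Proof.
move=> hF; rewrite limf_esupE; apply: le_ereal_inf_tmp => y [V FV <-].
have [x [Vx hx]] := filter_ex (filterI FV hF).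
by apply: le_ereal_sup_tmp; exists (f x) => //; exists x.
Qed.
Lemma near_right_ex (R : realType) (P : R -> Prop) : (\forall x \near 0^'+, P x) -> exists2 eta : R, 0 < eta & forall x, 0 < x -> x < eta -> P x.
Proof.
move=> /nbhs_ballP [eta /= eta0 H]; exists eta => // x x0 xe.
apply: H => //; rewrite /ball /= sub0r normrN gtr0_norm //.
Qed.

Lemma sq_le (R : realFieldType) (g K : R) : -K <= g -> g <= K -> g ^+ 2 <= K ^+ 2.
Proof. move=> h1 h2; rewrite !expr2; nra. Qed.
Lemma div_le_self (R : realFieldType) (h s : R) : 0 < h -> 1 <= s -> h / s <= h.
Proof. move=> h0 s1; rewrite ler_pdivrMr; [nra | lra]. Qed.
Lemma aux1 (R : realFieldType) (h e1 : R) : 0 <= h <= 1 -> 0 < e1 -> h * (e1 / 4) <= e1 / 4.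
Proof. move=> /andP[h0 h1] e0; nra. Qed.
Lemma aux2 (R : realFieldType) (x g : R) : 0 <= x -> x <= 1 -> x * g ^+ 2 <= 1/4 ->
  - (1/2) <= x * g <= 1/2.
Proof.
move=> x0 x1 hx.
have : (x * g) ^+ 2 <= 1 / 4.
  rewrite exprMn; apply: le_trans hx; apply: ler_wpM2r; first exact: sqr_ge0.
  rewrite expr2; nra.
rewrite -ler_norml => hq.
have : `|x * g| ^+ 2 <= (1/2) ^+ 2 by rewrite real_normK ?num_real //; lra.
by rewrite ler_sqr ?nnegrE // ler0n.
Qed.
Lemma aux3 (R : realFieldType) (g u v : R) : g * u = v -> 0 <= v -> - (1/2) <= u <= 1/2 ->
  g / (1 - u) <= g + 2 * v.
Proof. move=> guv hv /andP[u1 u2]; rewrite ler_pdivrMr; last lra. nra. Qed.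


Unset Implicit Arguments.

Lemma gK (R : realFieldType) (J e1 g K : R) : J - e1 / 2 < g -> g < J + e1 / 2 ->
  - K + 1 <= J <= K - 1 -> 0 < e1 -> e1 <= 1 -> - K <= g /\ g <= K.
Proof. move=> h1 h2 /andP[h3 h4] h5 h6; split; timeout 10 lra. Qed.

Lemma q1 (R : realFieldType) (x e : R) : x <= e / 4 -> e <= 1 -> x <= 1 / 4.
Proof. move=> *; lra. Qed.
Lemma q2 (R : realFieldType) (h c e : R) : h < c -> c <= e / 4 -> e <= 1 -> h <= 1.
Proof. move=> *; lra. Qed.
Lemma q3 (R : realFieldType) (J e e1 g X w v : R) : g <= X -> X <= w -> w <= g + 2 * v ->
  J - e1 / 2 < g -> g < J + e1 / 2 -> v <= e1 / 4 -> e1 <= e -> J - e <= X <= J + e.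
Proof. move=> *; apply/andP; split; lra. Qed.

Lemma core (R : realType) d (rho : R -> 'M[R[i]]_d) theta D (e : R) :
  (forall t, faithful_state (rho t)) -> is_right_derivative rho theta D -> 0 < e ->
  \forall h \near (0:R)^'+,
    ((JR rho theta D - e)%:E <= limn_esup (fun n => (Jseq rho theta h n)%:E))%E /\
    (limn_esup (fun n => (Jseq rho theta h n)%:E) <= (JR rho theta D + e)%:E)%E.
Proof.
move=> hf hD he.
set J := JR rho theta D.
set e1 : R := Num.min e 1.
have e10 : 0 < e1 by rewrite lt_min he ltr01.
have e1e : e1 <= e by rewrite ge_min lexx.
have e11 : e1 <= 1 by rewrite ge_min lexx orbT.
set K : R := `|J| + 1.
have K1 : 1 <= K by rewrite lerDr.
have hJK : - K + 1 <= J <= K - 1.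
  have := ler_norm J; have : - `|J| <= J by rewrite lerNnormlW.
  rewrite /K; timeout 10 lra.
have [eta eta0 heta] : exists2 eta : R, 0 < eta &
    forall x, 0 < x -> x < eta -> `|J - gfun rho theta x| < e1 / 2.
  apply: near_right_ex.
  have := g_cvg hD; move/cvgrPdist_lt => /(_ (e1 / 2)); apply.
  by rewrite divr_gt0.
set c : R := e1 / (4 * K ^+ 2).
have K0 : 0 < K by timeout 10 lra.
have hcK : c * K ^+ 2 = e1 / 4 by rewrite /c; field; rewrite gt_eqF // exprn_gt0.
have c0 : 0 < c by rewrite /c divr_gt0 // mulr_gt0 // exprn_gt0.
clearbody J e1 K c.
near=> h.
have h0 : 0 < h by near: h; apply: nbhs_right_gt.
have heh : h < eta by near: h; apply: nbhs_right_lt.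
have hc : h < c by near: h; apply: nbhs_right_lt.
have key : forall n, (0 < n)%N -> J - e <= Jseq rho theta h n <= J + e.
  move=> n hn; rewrite Jseq_formula //.
  have hs : 1 <= cn R n by rewrite /cn -[X in X <= _]sqrtr1 ler_sqrt ?ler0n // ler1n.
  set dl := h / cn R n.
  have dl0 : 0 < dl by rewrite /dl divr_gt0 //; timeout 10 lra.
  have dlh : dl <= h by apply: div_le_self.
  have hg := heta dl dl0 (le_lt_trans dlh heh).
  set g := gfun rho theta dl.
  move: hg; rewrite ltr_distlC => /andP [hg1 hg2].
  change (gfun rho theta dl) with g in hg1; change (gfun rho theta dl) with g in hg2.
  have [gK1 gK2] := @gK _ _ _ _ _ hg1 hg2 hJK e10 e11.
  have hgK : g ^+ 2 <= K ^+ 2 by apply: sq_le.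
  have hhK : h ^+ 2 * K ^+ 2 <= h * (e1 / 4).
    rewrite -hcK (_ : h ^+ 2 * K ^+ 2 = h * (h * K ^+ 2)); last by ring.
    apply: ler_wpM2l; first exact: ltW.
    apply: ler_wpM2r; [by rewrite exprn_ge0 // ltW | exact: ltW].
  have hh1 : h <= 1.
    have : c <= e1 / 4.
      rewrite -hcK -[X in X <= _]mulr1; apply: ler_wpM2l; first exact: ltW.
      exact: exprn_ege1.
    move=> hc4; exact: q2 hc hc4 e11.
  have hg2K : h ^+ 2 * g ^+ 2 <= e1 / 4.
    have : h ^+ 2 * g ^+ 2 <= h ^+ 2 * K ^+ 2 by apply: ler_wpM2l => //; rewrite exprn_ge0 // ltW.
    have := @aux1 _ h e1 ltac:(apply/andP; split; [exact: ltW | exact: hh1]) e10.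
    move=> a1 a2; exact: le_trans a2 (le_trans hhK a1).
  have hu : `|h ^+ 2 * g| <= 1 / 2.
    rewrite ler_norml; apply: aux2.
    - by rewrite exprn_ge0 // ltW.
    - by rewrite expr_le1 // ltW.
    - exact: q1 hg2K e11.
  have /andP [b1 b2] := @Jbounds _ h g n h0 hn hu.
  set u := h ^+ 2 * g in hu b2 *.
  have hu2 : - (1/2) <= u <= 1/2 by rewrite -ler_norml.
  have guv : g * u = h ^+ 2 * g ^+ 2 by rewrite /u mulrCA -expr2.
  have hv : 0 <= h ^+ 2 * g ^+ 2 by rewrite mulr_ge0 ?sqr_ge0.
  have b3 : g / (1 - u) <= g + 2 * (h ^+ 2 * g ^+ 2).
    exact: aux3.
  exact: q3 b1 b2 b3 hg1 hg2 hg2K e1e.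
split.
  rewrite /limn_esup; apply: le_limf_esup_near.
  near=> n; rewrite lee_fin.
  have hn : (0 < n)%N by near: n; exact: nbhs_infty_gt.
  by case/andP: (key n hn).
rewrite /limn_esup; apply: limf_esup_le_near.
near=> n; rewrite lee_fin.
have hn : (0 < n)%N by near: n; exact: nbhs_infty_gt.
by case/andP: (key n hn).
Unshelve. all: by end_near.
Qed.

Theorem mainTheorem6 (R : realType) (d : nat) (rho : R -> 'M[R[i]]_d)
  (theta : R) (D : 'M[R[i]]_d) :
  (forall t : R, faithful_state (rho t)) ->
  is_right_derivative rho theta D ->
  JR1 rho theta = ((JR rho theta D)%:E)%E.
Proof.
move=> hf hD; rewrite /JR1.
apply/eqP; rewrite eq_le; apply/andP; split.
  apply/lee_addgt0Pr => e he; apply: limf_esup_le_near.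
  have := @core _ _ _ _ _ _ hf hD he; apply: filterS => h [_ h2].
  by rewrite -EFinD.
apply/lee_subgt0Pr => e he; apply: le_limf_esup_near.
have := @core _ _ _ _ _ _ hf hD he; apply: filterS => h [h1 _].
by rewrite -EFinB.
Qed.
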